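(* Let $n\ge 2$, $k\ge 1$, $M_1\in\mathbb N^+$ and $\mathbf C=(c_0,\dots,c_k)\in\{0,1\}^{k+1}$, and let $\gamma$ be Euler's constant. Let $P(O_{\mathbf C}(n,m+c_k-1))=O_{\mathbf C}(n,m+c_k-1)/n!^k$. (i) If $c_0=0$ and $M=\left\lceil ekc_1(\log(n-1)+\gamma)+\frac{e\pi^2}{6}\sum_{\beta=2}^k c_\beta\binom{k}{\beta}\right\rceil+M_1$, then $$\sum_{m=M+1}^{n}P(O_{\mathbf C}(n,m+c_k-1))\le \exp(-M_1).$$ (ii) If $c_0=1$ and $M'=\left\lceil ekc'_1(\log(n-1)+\gamma)+\frac{e\pi^2}{6}\sum_{\beta=2}^k c'_\beta\binom{k}{\beta}\right\rceil+M_1$, then $$\sum_{1\le m< n+1-M'}P(O_{\mathbf C}(n,m+c_k-1))\le \exp(-M_1).$$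
   Context: Fix integers $k\ge 1$, $n\ge 1$ and $\mathbf C=(c_0,\dots,c_k)\in\{0,1\}^{k+1}$; put $\mathbf C'=(1,\dots,1)-\mathbf C=(c'_0,\dots,c'_k)$. Consider $k$-tuples $(\pi_1,\dots,\pi_k)$ of permutations of $\{1,\dots,n\}$ (there are $n!^k$). A position $\alpha$ is a record of a permutation $\pi$ if $\pi(\alpha)<\pi(\alpha')$ for every $\alpha'<\alpha$ (position $1$ is always a record); equivalently records index the minimal elements of the points $(\alpha,\pi(\alpha))$ under strict componentwise domination. For a tuple, let $l_\alpha$ be the number of $\beta\in\{1,\dots,k\}$ for which $\alpha$ is a record of $\pi_\beta$. The $\mathbf C$ sequential optimization set of the tuple is $S=\{\alpha:c_{l_\alpha}=1\}$, with weight $|S|$. For an integer $m$, $O_{\mathbf C}(n,m)$ is the number of $k$-tuples whose weight equals $m$. Thus $\sum_{m>M}P(O_{\mathbf C}(n,m+c_k-1))$ is the probability that a uniformly random $k$-tuple has weight $>M+c_k-1$. $\log$ is the natural logarithm. *)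

(* Defs.v *)
From HB Require Import structures.
From mathcomp Require Import all_boot all_order all_algebra all_fingroup.
From mathcomp Require Import all_classical all_reals all_analysis.
Import Order.TTheory GRing.Theory Num.Theory.
Local Open Scope ring_scope.

(* Positions 1..n are represented by 'I_n (0-indexed); permutations by 'S_n. *)
Definition is_record (n : nat) (s : 'S_n) (i : 'I_n) : bool :=
  [forall j : 'I_n, (j < i)%N ==> (s i < s j)%N].

Definition lcount (n k : nat) (t : {ffun 'I_k -> 'S_n}) (a : 'I_n) : nat :=
  #|[set b : 'I_k | is_record n (t b) a]|.

Definition weight (n k : nat) (C : 'I_k.+1 -> bool) (t : {ffun 'I_k -> 'S_n}) : nat :=
  #|[set a : 'I_n | C (inord (lcount n k t a))]|.

Definition OC (n k : nat) (C : 'I_k.+1 -> bool) (m : nat) : nat :=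
  #|[set t : {ffun 'I_k -> 'S_n} | weight n k C t == m]|.

Definition POC (R : realType) (n k : nat) (C : 'I_k.+1 -> bool) (m : nat) : R :=
  (OC n k C m)%:R / ((n`!) ^ k)%:R.

Definition cR (R : realType) (k : nat) (C : 'I_k.+1 -> bool) (b : nat) : R :=
  (C (inord b) : nat)%:R.

Definition euler_gamma (R : realType) : R :=
  limn (fun N : nat => \sum_(i < N.+1) (i.+1%:R)^-1 - ln (N.+1%:R : R)).

Definition threshold (R : realType) (n k : nat) (c : nat -> R) (M1 : nat) : int :=
  Num.ceil (expR 1 * k%:R * c 1%N * (ln ((n - 1)%:R : R) + euler_gamma R)
            + expR 1 * pi ^+ 2 / 6%:R *
              \sum_(2 <= b < k.+1) c b * ('C(k, b))%:R) + M1%:Z.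

(* Main.v *)
Require Import Defs.
From HB Require Import structures.
From mathcomp Require Import all_boot all_order all_algebra all_fingroup.
From mathcomp Require Import all_classical all_reals all_analysis.
From mathcomp Require Import ring lra zify.
Import Order.TTheory GRing.Theory Num.Theory numFieldNormedType.Exports.
Set Implicit Arguments.
Unset Strict Implicit.
Unset Printing Implicit Defensive.
Local Open Scope ring_scope.
Section Analytic.
Variable R : realType.

Lemma lnB_le (x y : R) : 0 < x -> 0 < y -> ln x - ln y <= x / y - 1.
Proof.
move=> x0 y0.
have xy0 : 0 < x / y by rewrite divr_gt0.
have -> : ln x - ln y = ln (x / y).
  by rewrite lnM ?posrE ?invr_gt0 // lnV ?posrE.
have := @le_ln1Dx R (x / y - 1).
rewrite addrCA subrr addr0; apply; lra.
Qed.

Lemma e_ge : (5/2 : R) <= expR 1.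
Proof.
have -> : expR 1 = expR (8^-1 : R) ^+ 8 by rewrite -expRM_natr mulVf.
apply: (@le_trans _ _ ((9/8 : R)^+8)); first by rewrite !exprS expr0; lra.
rewrite ler_pXn2r // ?nnegrE ?expR_ge0 //; try lra.
have := expR_ge1Dx (8^-1 : R); lra.
Qed.

Definition gseq (N : nat) : R :=
  \sum_(i < N.+1) (i.+1%:R)^-1 - ln (N.+1%:R : R).

Lemma gseq_dec : nonincreasing_seq gseq.
Proof.
apply/nonincreasing_seqP => N; rewrite /gseq.
have := @lnB_le (N.+1%:R) (N.+2%:R).
rewrite !ltr0n => /(_ erefl erefl).
set c := (N.+2%:R : R)^-1.
have -> : (N.+1%:R / N.+2%:R - 1 : R) = - c.
  rewrite /c -[X in _ - X](@divff _ (N.+2%:R)) ?pnatr_eq0 //.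
  by rewrite -mulrBl -opprB mulNr -natrB // subSnn mul1r.
move=> h.
have -> : \sum_(i < N.+2) (i.+1%:R : R)^-1 = \sum_(i < N.+1) (i.+1%:R : R)^-1 + c by rewrite big_ord_recr.
rewrite -addrA lerD2l; lra.
Qed.

Lemma gseq_lb N : 3/2 - ln 3 <= gseq N.+1.
Proof.
suff H : 3/2 - ln 3 <= \sum_(i < N.+2) (i.+1%:R : R)^-1 - ln (N.+3%:R).
  apply: (le_trans H); rewrite /gseq lerD2l lerN2 ler_ln ?posrE ?ltr0n //.
  by rewrite ler_nat.
elim: N => [|N IH].
  rewrite !big_ord_recr big_ord0 /=; lra.
have := @lnB_le (N.+4%:R) (N.+3%:R).
rewrite !ltr0n => /(_ erefl erefl).
set c := (N.+3%:R : R)^-1.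
have -> : \sum_(i < N.+3) (i.+1%:R : R)^-1 = \sum_(i < N.+2) (i.+1%:R : R)^-1 + c by rewrite big_ord_recr.
rewrite -addrA.
have -> : (N.+4%:R / N.+3%:R - 1 : R) = c.
  rewrite /c -[X in _ - X](@divff _ (N.+3%:R)) ?pnatr_eq0 //.
  by rewrite -mulrBl -natrB // subSnn mul1r.
move=> h; lra.
Qed.

Lemma gamma_ge : 3/2 - ln 3 <= euler_gamma R.
Proof.
have cv : cvgn gseq.
  apply: (@near_nonincreasing_is_cvgn _ _ (3/2 - ln 3)).
    by apply: nearW; exact: gseq_dec.
  exists 1%N => // -[|N] //= _; exact: gseq_lb.
rewrite /euler_gamma -/gseq.
apply: limr_ge => //.
exists 1%N => // -[|N] //= _; exact: gseq_lb.
Qed.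

Lemma ln3_le : ln (3 : R) <= 3 / expR 1.
Proof.
have h : ln (3:R) - ln (expR 1) <= 3 / expR 1 - 1.
  by apply: lnB_le => //; rewrite expR_gt0.
rewrite expRK in h; lra.
Qed.

Lemma gamma_ge2 : (expR 1 - 1) / 2 <= expR 1 * euler_gamma R.
Proof.
have e := e_ge; have g := gamma_ge; have l := ln3_le.
have e0 : 0 < expR 1 :> R by rewrite expR_gt0.
have : expR 1 * (3/2 - ln 3) <= expR 1 * euler_gamma R by rewrite ler_pM2l.
have : expR 1 * ln 3 <= 3 :> R.
  have : expR 1 * ln 3 <= expR 1 * (3 / expR 1) :> R by rewrite ler_pM2l.
  by rewrite mulrCA divff ?mulr1 // gt_eqF.
move=> h1 h2; lra.
Qed.

End Analytic.

Lemma bump_lt (h x y : nat) : (bump h x < bump h y)%N = (x < y)%N.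
Proof. rewrite /bump; case: leqP => h1; case: leqP => h2 /=; lia. Qed.

Definition ins n (v : 'I_n.+1) (s : 'S_n) : 'S_n.+1 := lift_perm ord_max v s.

Lemma ins_max n v (s : 'S_n) : ins v s ord_max = v.
Proof. exact: lift_perm_id. Qed.

Lemma ins_lift n v (s : 'S_n) a : ins v s (lift ord_max a) = lift v (s a).
Proof. exact: lift_perm_lift. Qed.

Lemma lift_maxE n (a : 'I_n) : lift ord_max a = widen_ord (leqnSn n) a.
Proof. by apply/val_inj; rewrite /= /bump leqNgt ltn_ord. Qed.

Lemma ord_split n (j : 'I_n.+1) : (j < n)%N -> exists j' : 'I_n, j = lift ord_max j'.
Proof. by move=> jn; exists (Ordinal jn); apply/val_inj; rewrite /= /bump leqNgt jn. Qed.

Lemma rec_max n v (s : 'S_n) : is_record n.+1 (ins v s) ord_max = (v == ord0).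
Proof.
apply/forallP/eqP => [H | ->].
  case: n v s H => [|n] v s H.
    by apply/val_inj; case: v {H} => -[|m] //.
  have := H (lift ord_max (s^-1 ord0)%g).
  rewrite ins_max ins_lift permKV lift_max ltn_ord /= /bump => h.
  apply/val_inj => /=; move: h; case: leqP => //= h1 h2; lia.
move=> j; apply/implyP => jn.
case: (ord_split jn) => j' ->.
by rewrite ins_max ins_lift /= /bump leq0n add1n.
Qed.

Lemma rec_lift n v (s : 'S_n) a :
  is_record n.+1 (ins v s) (lift ord_max a) = is_record n s a.
Proof.
apply/forallP/forallP => H j.
  have := H (lift ord_max j).
  by rewrite !ins_lift !lift_max /= bump_lt.
apply/implyP; rewrite lift_max => ja.
have jn : (j < n)%N by exact: ltn_trans ja (ltn_ord a).
move: ja; case: (ord_split jn) => j' -> ja.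
rewrite lift_max in ja.
have := H j'; rewrite ja /= => h.
by rewrite !ins_lift /= bump_lt.
Qed.

Definition hmap n k (p : {ffun 'I_k -> 'I_n.+1} * {ffun 'I_k -> 'S_n}) :
  {ffun 'I_k -> 'S_n.+1} := [ffun b => ins (p.1 b) (p.2 b)].

Lemma hmap_inj n k : injective (@hmap n k).
Proof.
move=> [v u] [v' u'] /ffunP H.
have e b : v b = v' b /\ u b = u' b.
  have := H b; rewrite !ffunE /= => E.
  have ev : v b = v' b by rewrite -(ins_max (v b) (u b)) E ins_max.
  split => //; apply/permP => a; apply: (@lift_inj _ (v b)).
  by rewrite -ins_lift E ins_lift -ev.
by congr (_, _); apply/ffunP => b; [exact: (e b).1 | exact: (e b).2].
Qed.

Lemma hmap_bij n k : bijective (@hmap n k).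
Proof.
apply: inj_card_bij; first exact: hmap_inj.
by rewrite card_prod !card_ffun !card_ord !card_Sn factS expnMn.
Qed.

Lemma lcount_max n k p :
  lcount n.+1 k (@hmap n k p) ord_max = #|[set b | p.1 b == ord0]|.
Proof. by rewrite /lcount; apply: eq_card => b; rewrite !inE ffunE rec_max. Qed.

Lemma lcount_lift n k p a :
  lcount n.+1 k (@hmap n k p) (lift ord_max a) = lcount n k p.2 a.
Proof. by rewrite /lcount; apply: eq_card => b; rewrite !inE ffunE rec_lift. Qed.

Lemma cardE_sum (U : finType) (b : pred U) :
  #|[set t | b t]| = (\sum_t (b t : nat))%N.
Proof.
rewrite -sum1_card big_mkcond /=; apply: eq_bigr => t _.
by rewrite inE; case: (b t).
Qed.

Lemma count_sum (U : finType) (W : U -> nat) (N : nat) (P : pred nat)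
  (f : nat -> nat) (Q : pred nat) :
  (forall m, P m -> Q (f m)) -> {in P &, injective f} ->
  (\sum_(m < N | P m) #|[set t | W t == f m]| <= #|[set t | Q (W t)]|)%N.
Proof.
move=> PQ finj.
under eq_bigr => m _ do rewrite cardE_sum.
rewrite exchange_big /= cardE_sum; apply: leq_sum => t _.
case: (pickP (fun m : 'I_N => P m && (W t == f m))) => [m0 /andP[Pm0 e0] | none].
  rewrite (bigD1 m0) //= e0 big1 ?addn0 /=.
    by rewrite (eqP e0) PQ.
  move=> m /andP[Pm ne]; apply/eqP; rewrite eqb0; apply/negP => /eqP e.
  move/eqP: e0; rewrite e => /finj => /(_ Pm Pm0) em.
  by move: ne; rewrite (_ : m = m0) ?eqxx //; apply/val_inj.
rewrite big1 // => m Pm; have := none m; rewrite Pm /= => ->; done.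
Qed.

Lemma weight_le n k C t : (weight n k C t <= n)%N.
Proof. by rewrite /weight -[X in (_ <= X)%N](card_ord n) max_card. Qed.

Lemma weight_compl n k C t :
  weight n k (fun i => ~~ C i) t = (n - weight n k C t)%N.
Proof.
rewrite /weight; set A := [set a | C _].
have h := cardsC A; rewrite card_ord in h.
rewrite -[X in (X - _)%N]h addKn.
by apply: eq_card => a; rewrite !inE.
Qed.

Lemma zsum N k (z : 'I_N) (D : nat -> bool) :
  (\sum_(v : {ffun 'I_k -> 'I_N}) D #|[set b | v b == z]|
    <= \sum_(j < k.+1) D j * 'C(k, j) * N ^ (k - j))%N.
Proof.
pose Z (v : {ffun 'I_k -> 'I_N}) := [set b | v b == z].
apply: (@leq_trans (\sum_v \sum_(B : {set 'I_k} | B \subset Z v) (D #|B| : nat))).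
  apply: leq_sum => v _; rewrite (bigD1 (Z v)) //=; exact: leq_addr.
rewrite (exchange_big_dep predT) //=.
have E (B : {set 'I_k}) : (\sum_(v | true && (B \subset Z v)) (D #|B| : nat))%N
           = (N ^ (k - #|B|) * D #|B|)%N.
  rewrite (eq_bigl (mem (pffun_on z (~: B) 'I_N))); last first.
    move=> v /=; apply/idP/pffun_onP.
      move=> sub; split => //.
      apply/supportP => b; rewrite inE negbK => bB.
      by have := fintype.subsetP sub b bB; rewrite inE => /eqP.
    case=> /supportP Hs _; apply/fintype.subsetP => b bB; rewrite inE; apply/eqP/Hs.
    by rewrite inE negbK.
  rewrite sum_nat_const card_pffun_on card_ord.
  have h := cardsC B; rewrite card_ord in h.
  by rewrite -[X in (X - _)%N]h addKn.
rewrite (eq_bigr _ (fun B _ => E B)).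
rewrite (partition_big (fun B : {set 'I_k} => (inord #|B| : 'I_k.+1)) predT) //=.
rewrite leq_eqVlt; apply/orP; left; apply/eqP; apply: eq_bigr => j _.
have cB (B : {set 'I_k}) : (inord #|B| == j :> 'I_k.+1) = (#|B| == j).
  apply/eqP/eqP => [<-|->]; last by rewrite inord_val.
  by rewrite inordK // ltnS (leq_trans (max_card _)) // card_ord.
rewrite (eq_bigr (fun _ => N ^ (k - j) * D j)%N); last first.
  by move=> B; rewrite cB => /eqP ->.
rewrite (eq_bigl (mem [set B : {set 'I_k} | #|B| == j])); last first.
  by move=> B /=; rewrite inE cB.
rewrite sum_nat_const card_draws card_ord.
lia.
Qed.

Section Real.
Variable R : realType.

Definition Esum (w : nat -> R) n k :=
  \sum_(t : {ffun 'I_k -> 'S_n}) \prod_(a < n) w (lcount n k t a).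

Lemma Esum_rec w n k : Esum w n.+1 k =
  (\sum_(v : {ffun 'I_k -> 'I_n.+1}) w #|[set b | v b == ord0]|) * Esum w n k.
Proof.
rewrite /Esum (reindex (@hmap n k)) /=; last exact/onW_bij/hmap_bij.
symmetry; rewrite big_distrl /=.
under eq_bigr => v _ do rewrite big_distrr /=.
rewrite pair_big /=; apply: eq_big => // -[v u] _ /=.
rewrite big_ord_recr /= (lcount_max (v, u)) mulrC; congr (_ * _).
by apply: eq_bigr => a _; rewrite -lift_maxE (lcount_lift (v, u)).
Qed.

Lemma Esum0 w k : Esum w 0 k = 1.
Proof.
rewrite /Esum; under eq_bigr => t _ do rewrite big_ord0.
by rewrite sumr_const card_ffun card_Sn card_ord /= exp1n.
Qed.

Lemma Esum1 w k : Esum w 1 k = w k.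
Proof.
rewrite Esum_rec Esum0 mulr1.
rewrite (eq_bigr (fun _ => w k)); last first.
  move=> v _; congr w; rewrite -[RHS](card_ord k); apply: eq_card => b.
  by rewrite !inE (ord1 (v b)) eqxx.
by rewrite sumr_const card_ffun !card_ord exp1n.
Qed.

Lemma Esum_ge0 w n k : (forall j, 0 <= w j) -> 0 <= Esum w n k.
Proof. by move=> w0; apply: sumr_ge0 => t _; apply: prodr_ge0 => a _. Qed.

Definition qq k (D : nat -> bool) (a : nat) : R :=
  \sum_(j < k.+1) (D j : nat)%:R * ('C(k, j))%:R / (a%:R) ^+ j.

Lemma qq_ge0 k D a : 0 <= qq k D a.
Proof.
apply: sumr_ge0 => j _; apply: divr_ge0; last exact: exprn_ge0.
by apply: mulr_ge0.
Qed.

Lemma zbound N k (z : 'I_N) (D : nat -> bool) (x : R) : (0 < N)%N -> 0 <= x ->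
  \sum_(v : {ffun 'I_k -> 'I_N}) (1 + x * (D #|[set b | v b == z]| : nat)%:R)
   <= N%:R ^+ k * (1 + x * qq k D N).
Proof.
move=> N0 x0.
rewrite big_split /= sumr_const card_ffun !card_ord -mulr_sumr mulrDr mulr1.
rewrite -natrX lerD2l mulrCA ler_wpM2l //.
apply: (@le_trans _ _ ((\sum_(j < k.+1) D j * 'C(k, j) * N ^ (k - j))%N%:R)).
  by rewrite -natr_sum ler_nat zsum.
rewrite natr_sum /qq mulr_sumr le_eqVlt; apply/orP; left; apply/eqP/eq_bigr => j _.
rewrite natrM natrM natrX exprB ?unitfE ?pnatr_eq0 -?lt0n //; last by rewrite -ltnS.
by rewrite natrX; ring.
Qed.

End Real.

Section Real2.
Variable R : realType.

Lemma Esum_bound k (D : nat -> bool) (x : R) n : 0 <= x -> (1 <= n)%N ->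
  Esum (fun j => 1 + x * (D j : nat)%:R) n k <=
  (n`! ^ k)%:R * (1 + x * (D k : nat)%:R) * \prod_(2 <= a < n.+1) (1 + x * qq R k D a).
Proof.
move=> x0; elim: n => [//|n IH] _.
have w0 j : 0 <= 1 + x * (D j : nat)%:R.
  by apply: addr_ge0 => //; exact: mulr_ge0.
case: n IH => [_|n IH].
  by rewrite Esum1 big_geq // /= exp1n mul1r mulr1.
rewrite Esum_rec.
apply: (@le_trans _ _ ((n.+2%:R ^+ k * (1 + x * qq R k D n.+2)) *
   ((n.+1`! ^ k)%:R * (1 + x * (D k : nat)%:R) * \prod_(2 <= a < n.+2) (1 + x * qq R k D a)))).
  apply: ler_pM.
  - by apply: sumr_ge0 => v _.
  - exact: Esum_ge0.
  - exact: (@zbound R n.+2 k ord0 D x).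
  - exact: IH.
rewrite [in X in _ <= X]big_nat_recr //= (factS n.+1) expnMn natrM !natrX.
rewrite le_eqVlt; apply/orP; left; apply/eqP; ring.
Qed.

Lemma prod_exp (F : nat -> R) m n : (forall a, 0 <= F a) ->
  \prod_(m <= a < n) (1 + F a) <= expR (\sum_(m <= a < n) F a).
Proof.
move=> F0; rewrite expR_sum; apply: ler_prod => a _.
by rewrite addr_ge0 ?ler01 ?F0 // expR_ge1Dx.
Qed.

Lemma expR_bool (b : bool) :
  expR ((b : nat)%:R : R) = 1 + (expR 1 - 1) * (b : nat)%:R.
Proof. by case: b => /=; rewrite ?expR0 ?mulr1 ?mulr0 ?addr0 // addrC subrK. Qed.

Lemma sum_expW n k C :
  \sum_t expR ((weight n k C t)%:R : R) =
  Esum (fun j => 1 + (expR 1 - 1) * (C (inord j) : nat)%:R) n k.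
Proof.
apply: eq_bigr => t _; rewrite /weight cardE_sum natr_sum expR_sum.
by apply: eq_bigr => a _; exact: expR_bool.
Qed.

Lemma markov (U : finType) (W : U -> nat) (T : nat) :
  (#|[set t | (T <= W t)%N]|%:R : R) * expR T%:R <= \sum_t expR (W t)%:R.
Proof.
rewrite mulr_natl -sumr_const.
apply: (@le_trans _ _ (\sum_(t in [set t | (T <= W t)%N]) expR (W t)%:R)).
  by apply: ler_sum => t; rewrite inE => h; rewrite ler_expR ler_nat.
rewrite [X in _ <= X](bigID (mem [set t | (T <= W t)%N])) /= lerDl.
by apply: sumr_ge0 => t _; exact: expR_ge0.
Qed.

Definition Qs k (C : 'I_k.+1 -> bool) n : R :=
  \sum_(2 <= a < n.+1) qq R k (fun j => C (inord j)) a.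

Lemma Qs_ge0 k (C : 'I_k.+1 -> bool) n : 0 <= Qs C n.
Proof. by apply: sumr_ge0 => a _; exact: qq_ge0. Qed.

Lemma e1_ge0 : 0 <= expR 1 - 1 :> R.
Proof. have := expR_ge1Dx (1 : R); lra. Qed.

Lemma tail k (C : 'I_k.+1 -> bool) n (T : nat) : (1 <= n)%N ->
  (#|[set t | (T + C ord_max <= weight n k C t)%N]|%:R : R)
    <= (n`! ^ k)%:R * expR (- T%:R + (expR 1 - 1) * Qs C n).
Proof.
move=> n1; set D := fun j => C (inord j).
have hm := markov (weight n k C) (T + C ord_max).
rewrite sum_expW in hm.
have hb := Esum_bound k D e1_ge0 n1.
have hDk : D k = C ord_max.
  by rewrite /D (_ : inord k = ord_max) //; apply/val_inj; rewrite /= inordK.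
rewrite hDk -expR_bool in hb.
have hp := @prod_exp (fun a => (expR 1 - 1) * qq R k D a) 2 n.+1.
rewrite -mulr_sumr in hp.
have hp' := hp (fun a => mulr_ge0 e1_ge0 (qq_ge0 _ _ _ a)).
rewrite -(ler_pM2r (expR_gt0 ((T + C ord_max)%:R))).
apply: (le_trans hm); apply: (le_trans hb).
rewrite -[X in _ <= X]mulrA -expRD natrD.
have -> : - T%:R + (expR 1 - 1) * Qs C n + (T%:R + (C ord_max : nat)%:R)
   = (expR 1 - 1) * Qs C n + (C ord_max : nat)%:R by ring.
rewrite expRD -mulrA ler_wpM2l // mulrC ler_wpM2r ?expR_ge0 //.
Qed.

End Real2.

Section Real3.
Variable R : realType.

Lemma aux_hb (a l1 l2 c d : R) : c <= d -> l1 - l2 <= - d -> a + l1 + c <= a + l2.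
Proof. move=> *; lra. Qed.

Lemma harm_bound n : (2 <= n)%N ->
  \sum_(2 <= a < n.+1) (a%:R : R)^-1 <= 2^-1 + ln ((n - 1)%:R).
Proof.
case: n => [|[|m]] // _; rewrite subSS subn0.
elim: m => [|m IH].
  by rewrite big_nat1 ln1 addr0.
rewrite big_nat_recr //=.
have := @lnB_le R (m.+1%:R) (m.+2%:R); rewrite !ltr0n => /(_ erefl erefl).
have -> : (m.+1%:R / m.+2%:R - 1 : R) = - (m.+2%:R)^-1.
  rewrite -[X in _ - X](@divff _ (m.+2%:R)) ?pnatr_eq0 //.
  by rewrite -mulrBl -opprB mulNr -natrB // subSnn mul1r.
have : (m.+3%:R : R)^-1 <= (m.+2%:R : R)^-1 by rewrite lef_pV2 ?posrE ?ler_nat.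
move=> h1 h2; apply: (le_trans (lerD IH (lexx _))); exact: aux_hb h1 h2.
Qed.

Lemma aux_sq (u a b c : R) : u <= 1 - a -> c <= a - b -> u + c <= 1 - b.
Proof. move=> *; lra. Qed.

Lemma inv_le (x y : R) : 0 < x -> x <= y -> y^-1 <= x^-1.
Proof.
move=> x0 xy; have y0 : 0 < y by apply: lt_le_trans xy.
by rewrite lef_pV2 ?posrE.
Qed.

Lemma sq_bound n j : (2 <= j)%N ->
  \sum_(2 <= a < n.+1) (a%:R ^+ j : R)^-1 <= 1.
Proof.
move=> j2.
suff H : forall m, \sum_(2 <= a < m.+2) (a%:R ^+ j : R)^-1 <= 1 - (m.+1%:R)^-1.
  case: n => [|n]; first by rewrite big_geq.
  apply: (le_trans (H n)); rewrite lerBlDr lerDl invr_ge0 ler0n //.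
elim=> [|m IH]; first by rewrite big_geq // invr1 subrr.
rewrite big_nat_recr //=.
suff h : (m.+2%:R ^+ j : R)^-1 <= (m.+1%:R)^-1 - (m.+2%:R)^-1.
  exact: aux_sq IH h.
have -> : (m.+1%:R : R)^-1 - (m.+2%:R)^-1 = (m.+1%:R * m.+2%:R)^-1.
  have h2 : (m.+1%:R : R) != 0 by rewrite pnatr_eq0.
  have h3 : (m.+2%:R : R) != 0 by rewrite pnatr_eq0.
  rewrite -[m.+2]addn1 natrD; field.
  have hm : (0 : R) <= m%:R by rewrite ler0n.
  by apply/andP; split; rewrite gt_eqF //; lra.
apply: inv_le; first by rewrite mulr_gt0 ?ltr0n.
apply: (@le_trans _ _ (m.+2%:R ^+ 2)).
  by rewrite expr2 ler_pM2r ?ltr0n // ler_nat.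
by rewrite ler_eXn2l // ltr1n.
Qed.

Lemma e_le3 : expR 1 <= 3 :> R.
Proof.
have -> : expR 1 = expR (6^-1 : R) ^+ 6 by rewrite -expRM_natr mulVf.
apply: (@le_trans _ _ ((6/5 : R)^+6)); last by rewrite !exprS expr0; lra.
rewrite ler_pXn2r // ?nnegrE ?expR_ge0 //; try lra.
have h1 := expR_ge1Dx (- 6^-1 : R).
have h2 := @expRxMexpNx_1 R (6^-1).
have h3 := expR_gt0 (6^-1 : R).
nra.
Qed.

Lemma Qs_bound k (C : 'I_k.+1 -> bool) n : (1 <= k)%N -> (2 <= n)%N ->
  C ord0 = false ->
  (expR 1 - 1) * Qs R C n <=
  expR 1 * k%:R * cR R k C 1 * (ln ((n - 1)%:R) + euler_gamma R)
  + expR 1 * pi ^+ 2 / 6%:R * \sum_(2 <= b < k.+1) cR R k C b * ('C(k, b))%:R.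
Proof.
move=> k1 n2 C0.
rewrite /Qs /qq exchange_big /=.
rewrite -(big_mkord xpredT (fun j => \sum_(2 <= i < n.+1)
   (C (inord j) : nat)%:R * ('C(k, j))%:R / (i%:R : R) ^+ j)).
rewrite big_ltn // big_ltn //=.
rewrite big1; last first.
  move=> a _; rewrite (_ : inord 0 = ord0); last by apply/val_inj; rewrite /= inordK.
  by rewrite C0 mul0r mul0r.
rewrite add0r.
set c1 := cR R k C 1.
set S := \sum_(2 <= b < k.+1) cR R k C b * ('C(k, b))%:R.
set L := ln ((n - 1)%:R : R).
set H := \sum_(2 <= a < n.+1) (a%:R : R)^-1.
have F1 : \sum_(2 <= a < n.+1) (C (inord 1) : nat)%:R * ('C(k, 1))%:R / (a%:R : R) ^+ 1
   = c1 * k%:R * H.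
  rewrite /H mulr_sumr; apply: eq_bigr => a _; by rewrite bin1 expr1.
rewrite F1.
have F2 : \sum_(2 <= j < k.+1) \sum_(2 <= a < n.+1)
     (C (inord j) : nat)%:R * ('C(k, j))%:R / (a%:R : R) ^+ j <= S.
  apply: ler_sum_nat => j /andP[j2 _].
  rewrite -mulr_sumr -[X in _ <= X]mulr1 ler_wpM2l ?mulr_ge0 //.
  exact: sq_bound.
have hH : H <= 2^-1 + L by exact: harm_bound.
have hL : 0 <= L by rewrite /L ln_ge0 // ler1n subn_gt0.
have hg := gamma_ge2 R.
have he := e_le3.
have he1 := e_ge R.
have hpi := pi_ge2 R.
have hpi2 : 4 <= pi ^+ 2 :> R by rewrite expr2; nra.
have c10 : 0 <= c1 by rewrite /c1 /cR ler0n.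
have S0 : 0 <= S by apply: sumr_ge0 => b _; rewrite /cR mulr_ge0.
have ck0 : 0 <= c1 * k%:R by rewrite mulr_ge0.
have A : (expR 1 - 1) * (c1 * k%:R * H) <= expR 1 * k%:R * c1 * (L + euler_gamma R).
  have : (expR 1 - 1) * H <= expR 1 * (L + euler_gamma R).
    have : (expR 1 - 1) * H <= (expR 1 - 1) * (2^-1 + L).
      by rewrite ler_wpM2l // e1_ge0.
    have : 0 <= (expR 1 - 1) * L by rewrite mulr_ge0 // e1_ge0.
    move=> h1 h2; nra.
  move=> h; have := ler_wpM2l ck0 h.
  have -> : c1 * k%:R * ((expR 1 - 1) * H) = (expR 1 - 1) * (c1 * k%:R * H) by ring.
  have -> : c1 * k%:R * (expR 1 * (L + euler_gamma R)) = expR 1 * k%:R * c1 * (L + euler_gamma R) by ring.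
  by [].
have B : (expR 1 - 1) * S <= expR 1 * pi ^+ 2 / 6%:R * S.
  rewrite ler_wpM2r //.
  have : expR 1 * 4 <= expR 1 * pi ^+ 2 :> R by rewrite ler_wpM2l ?expR_ge0.
  move=> h; lra.
have B' : (expR 1 - 1) * (\sum_(2 <= j < k.+1) \sum_(2 <= a < n.+1)
     (C (inord j) : nat)%:R * ('C(k, j))%:R / (a%:R : R) ^+ j) <= (expR 1 - 1) * S.
  by rewrite ler_wpM2l // e1_ge0.
rewrite mulrDr; lra.
Qed.

End Real3.

Lemma final (R : realType) n k M1 (C : 'I_k.+1 -> bool) :
  (2 <= n)%N -> (1 <= k)%N -> C ord0 = false ->
  exists T : nat, threshold R n k (cR R k C) M1 = T%:Z /\
    (#|[set t | (T + C ord_max <= weight n k C t)%N]|%:R : R) / (n`! ^ k)%:R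
      <= expR (- (M1%:R : R)).
Proof.
move=> n2 k1 C0.
set X := expR 1 * k%:R * cR R k C 1 * (ln ((n - 1)%:R) + euler_gamma R)
  + expR 1 * pi ^+ 2 / 6%:R * \sum_(2 <= b < k.+1) cR R k C b * ('C(k, b))%:R.
have hQ : (expR 1 - 1) * Qs R C n <= X by exact: Qs_bound.
have hQ0 : 0 <= (expR 1 - 1) * Qs R C n by rewrite mulr_ge0 ?e1_ge0 ?Qs_ge0.
have hX : 0 <= X by apply: le_trans hQ.
have hc : 0 <= Num.ceil X by rewrite ceil_ge0; lra.
have hM : threshold R n k (cR R k C) M1 = Num.ceil X + M1%:Z by [].
have [T eT] : exists T : nat, threshold R n k (cR R k C) M1 = T%:Z.
  rewrite hM; case: (Num.ceil X) hc => [c|c] // _.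
  by exists (c + M1)%N.
exists T; split => //.
have hT : X + M1%:R <= (T%:R : R).
  have -> : (T%:R : R) = (T%:Z)%:~R by rewrite -pmulrn.
  rewrite -eT hM intrD -pmulrn lerD2r; exact: ceil_ge.
have n1 : (1 <= n)%N by apply: leq_trans n2.
have ht := tail R C T n1.
have f0 : (0 : R) < (n`! ^ k)%:R by rewrite ltr0n expn_gt0 fact_gt0.
rewrite ler_pdivrMr //.
apply: (le_trans ht); rewrite mulrC ler_wpM2r ?ler0n // ler_expR.
lra.
Qed.

Unset Implicit Arguments.

Theorem theorem5p2 (R : realType) (n k M1 : nat) (C : 'I_k.+1 -> bool) :
  (2 <= n)%N -> (1 <= k)%N -> (0 < M1)%N ->
  (* (i) *)
  (C ord0 = false ->
    let M := threshold R n k (cR R k C) M1 in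
    \sum_(m < n.+1 | M < (m : nat)%:Z) POC R n k C (m + C ord_max - 1)%N
      <= expR (- (M1%:R : R))) /\
  (* (ii) *)
  (C ord0 = true ->
    let M' := threshold R n k (fun b => 1 - cR R k C b) M1 in
    \sum_(m < n.+1 | (1 <= m)%N && ((m : nat)%:Z < n.+1%:Z - M'))
        POC R n k C (m + C ord_max - 1)%N
      <= expR (- (M1%:R : R))).
Proof.
move=> n2 k1 M10.
have f0 : (0 : R) < (n`! ^ k)%:R by rewrite ltr0n expn_gt0 fact_gt0.
split.
  move=> C0; cbv zeta.
  have [T [eT hT]] := final R M1 n2 k1 C0.
  rewrite /POC -mulr_suml -natr_sum.
  apply: le_trans hT; rewrite ler_wpM2r ?invr_ge0 ?ler0n // ler_nat.
  rewrite /OC eT.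
  apply: (@count_sum _ (weight n k C) n.+1 (fun m => (T%:Z < m%:Z)%R)
            (fun m => m + C ord_max - 1)%N (fun w => T + C ord_max <= w)%N).
    by move=> m /=; lia.
  by move=> m1 m2; rewrite /in_mem /=; lia.
move=> C1; cbv zeta.
set C' := fun i => ~~ C i.
have C'0 : C' ord0 = false by rewrite /C' C1.
have eC : (fun b => 1 - cR R k C b) = cR R k C'.
  by apply: funext => b; rewrite /cR /C'; case: (C _) => /=; rewrite ?subrr ?subr0.
have [T [eT hT]] := final R M1 n2 k1 C'0.
rewrite /POC -mulr_suml -natr_sum.
apply: le_trans hT; rewrite ler_wpM2r ?invr_ge0 ?ler0n // ler_nat.
rewrite /OC eC eT.
have -> : #|[set t | (T + C' ord_max <= weight n k C' t)%N]|
        = #|[set t | (T + C' ord_max <= n - weight n k C t)%N]|.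
  by apply: eq_card => t; rewrite !inE weight_compl.
apply: (@count_sum _ (weight n k C) n.+1
          (fun m => (1 <= m)%N && (m%:Z < n.+1%:Z - T%:Z)%R)
          (fun m => m + C ord_max - 1)%N
          (fun w => T + C' ord_max <= n - w)%N).
  by move=> m /=; rewrite /C'; case: (C ord_max) => /=; lia.
by move=> m1 m2; rewrite /in_mem /=; lia.
Qed.
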